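(* Let $X$ be a real Hilbert space, let $\gamma>0$, and let $f:X\to(-\infty,+\infty]$ be a proper $\Phi_{lsc}^{\mathbb{R}}$-convex function such that $\mathrm{dom}\, f=\mathrm{dom}\,\partial_{lsc}^{\mathbb{R}} f$. Let $x_0\in\mathrm{dom}\, f$. If there exist $a_0\geq -\frac{1}{2\gamma}$ and $x\in X$ such that $$x\in\arg\min_{z\in X}\Big[f(z)+\Big(\tfrac{1}{2\gamma}+a_0\Big)\|z-x_0\|^2\Big],$$ then $\big(J_\gamma(x_0)-J_\gamma(x)\big)\cap\partial_{lsc}^{\mathbb{R}} f(x)\neq\emptyset$, where $J_\gamma(x_0)-J_\gamma(x)=\{\phi_0-\phi:\ \phi_0\in J_\gamma(x_0),\ \phi\in J_\gamma(x)\}\subset\mathbb{R}\times X$.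
   Context: $\Phi_{lsc}^{\mathbb{R}}=\{\phi=(a,u)\in\mathbb{R}\times X\}$, where $\phi=(a,u)$ is identified with the function $\phi(x)=-a\|x\|^2+\langle u,x\rangle$; differences of elements are taken componentwise in $\mathbb{R}\times X$. A function $f:X\to(-\infty,+\infty]$ is $\Phi_{lsc}^{\mathbb{R}}$-convex if $f(x)=\sup\{\phi(x):\phi\in\Phi_{lsc}^{\mathbb{R}},\ \phi\le f\}$ for all $x\in X$. For $x_0\in\mathrm{dom}\, f$, the $\Phi_{lsc}^{\mathbb{R}}$-subdifferential is $\partial_{lsc}^{\mathbb{R}} f(x_0)=\{\phi\in\Phi_{lsc}^{\mathbb{R}}: f(y)-f(x_0)\ge\phi(y)-\phi(x_0)\ \forall y\in X\}$, and $\mathrm{dom}\,\partial_{lsc}^{\mathbb{R}} f=\{x: \partial_{lsc}^{\mathbb{R}} f(x)\neq\emptyset\}$. The duality map is $J_\gamma(x)=\partial_{lsc}^{\mathbb{R}}\big(\tfrac{1}{2\gamma}\|\cdot\|^2\big)(x)=\{(a,(\tfrac1\gamma+2a)x): a\in\mathbb{R},\ 2\gamma a\ge -1\}$. *)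

(* Defs.v *)
From HB Require Import structures.
From mathcomp Require Import all_boot all_order all_algebra.
From mathcomp Require Import all_classical all_reals all_analysis.
Set Implicit Arguments. Unset Strict Implicit. Unset Printing Implicit Defensive.
Import Order.TTheory GRing.Theory Num.Theory.
Import numFieldNormedType.Exports.
Local Open Scope classical_set_scope.
Local Open Scope ring_scope.

Definition is_inner_product (R : realType) (X : completeNormedModType R)
    (ip : X -> X -> R) : Prop :=
  (forall x y, ip x y = ip y x) /\
  (forall x y z, ip (x + y) z = ip x z + ip y z) /\
  (forall (k : R) x y, ip (k *: x) y = k * ip x y) /\
  (forall x, ip x x = `|x| ^+ 2).

Definition phiev (R : realType) (X : completeNormedModType R)
    (ip : X -> X -> R) (phi : R * X) (x : X) : R :=
  - phi.1 * `|x| ^+ 2 + ip phi.2 x.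

Definition phidiff (R : realType) (X : completeNormedModType R)
    (p q : R * X) : R * X := (p.1 - q.1, p.2 - q.2).

Definition edom (R : realType) (X : completeNormedModType R)
    (f : X -> \bar R) : set X := [set x | (f x < +oo)%E].

Definition proper_fun (R : realType) (X : completeNormedModType R)
    (f : X -> \bar R) : Prop :=
  (forall x, f x != -oo%E) /\ (exists x, (f x < +oo)%E).

Definition phi_convex (R : realType) (X : completeNormedModType R)
    (ip : X -> X -> R) (f : X -> \bar R) : Prop :=
  forall x, f x = ereal_sup
    [set (phiev ip phi x)%:E | phi in [set phi : R * X |
        forall y, ((phiev ip phi y)%:E <= f y)%E]].

Definition phi_subdiff (R : realType) (X : completeNormedModType R)
    (ip : X -> X -> R) (f : X -> \bar R) (x0 : X) : set (R * X) :=
  [set phi | (f x0 < +oo)%E /\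
     forall y, ((phiev ip phi y - phiev ip phi x0)%:E <= f y - f x0)%E].

Definition dom_subdiff (R : realType) (X : completeNormedModType R)
    (ip : X -> X -> R) (f : X -> \bar R) : set X :=
  [set x | phi_subdiff ip f x !=set0].

Definition Jgamma (R : realType) (X : completeNormedModType R)
    (ip : X -> X -> R) (gamma : R) (x : X) : set (R * X) :=
  phi_subdiff ip (fun z => ((2 * gamma)^-1 * `|z| ^+ 2)%:E) x.

(* Main.v *)
Require Import Defs.
From HB Require Import structures.
From mathcomp Require Import all_boot all_order all_algebra.
From mathcomp Require Import all_classical all_reals all_analysis.
From mathcomp Require Import ring lra.
Import Order.TTheory GRing.Theory Num.Theory.
Import numFieldNormedType.Exports.
Local Open Scope classical_set_scope.
Local Open Scope ring_scope.

Section IP.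
Variables (R : realType) (X : completeNormedModType R) (ip : X -> X -> R).
Hypothesis Hip : is_inner_product ip.

Lemma ipZl' k x y : ip (k *: x) y = k * ip x y.
Proof. by case: Hip => _ [_ [H _]]. Qed.
Lemma ipDl' x y z : ip (x + y) z = ip x z + ip y z.
Proof. by case: Hip => _ [H _]. Qed.
Lemma ipC' x y : ip x y = ip y x.
Proof. by case: Hip => H _. Qed.
Lemma ipxx' x : ip x x = `|x| ^+ 2.
Proof. by case: Hip => _ [_ [_ H]]. Qed.
Lemma ipBl' x y z : ip (x - y) z = ip x z - ip y z.
Proof. by rewrite ipDl' -scaleN1r ipZl' mulN1r. Qed.
Lemma ip0l' y : ip 0 y = 0.
Proof. by rewrite -(scale0r (0:X)) ipZl' mul0r. Qed.
Lemma normB2 y x : `|y - x| ^+ 2 = `|y| ^+ 2 - 2 * ip x y + `|x| ^+ 2.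
Proof.
rewrite -!ipxx' !ipBl' (ipC' y (y - x)) (ipC' x (y - x)) !ipBl' (ipC' y x).
ring.
Qed.
End IP.
Arguments ipZl' {R X ip}.
Arguments ipDl' {R X ip}.
Arguments ipC' {R X ip}.
Arguments ipxx' {R X ip}.
Arguments ipBl' {R X ip}.
Arguments ip0l' {R X ip}.
Arguments normB2 {R X ip}.

Theorem proposition3 (R : realType) (X : completeNormedModType R)
    (ip : X -> X -> R) (gamma : R) (f : X -> \bar R) (x0 : X) :
  is_inner_product ip ->
  0 < gamma ->
  proper_fun f ->
  phi_convex ip f ->
  edom f = dom_subdiff ip f ->
  x0 \in edom f ->
  forall (a0 : R) (x : X),
    - (2 * gamma)^-1 <= a0 ->
    (forall z : X,
      (f x + (((2 * gamma)^-1 + a0) * `|x - x0| ^+ 2)%:E <=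
       f z + (((2 * gamma)^-1 + a0) * `|z - x0| ^+ 2)%:E)%E) ->
    exists phi0 phi : R * X,
      Jgamma ip gamma x0 phi0 /\ Jgamma ip gamma x phi /\
      phi_subdiff ip f x (phidiff phi0 phi).
Proof.
move=> Hip gpos [fN _] _ _ /set_mem x0d a0 x ha0 hmin.
set k := (2 * gamma)^-1 in ha0 hmin *.
have c0 : 0 <= k + a0 by lra.
exists (a0, (2 * (k + a0)) *: x0), (- k, 0); split; [|split].
- split; first by rewrite ltry.
  move=> y; rewrite -EFinB lee_fin /phiev /= !(ipZl' Hip) (ipxx' Hip) -/k.
  have := normB2 Hip y x0.
  have := mulr_ge0 c0 (sqr_ge0 `|y - x0|).
  set n := `|y - x0| ^+ 2 => h1 h2.
  rewrite -subr_ge0.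
  have -> : k * `|y| ^+ 2 - k * `|x0| ^+ 2 -
    (- a0 * `|y| ^+ 2 + 2 * (k + a0) * ip x0 y -
     (- a0 * `|x0| ^+ 2 + 2 * (k + a0) * `|x0| ^+ 2)) = (k + a0) * n.
    by rewrite h2; ring.
  exact: h1.
- split; first by rewrite ltry.
  move=> y; rewrite -EFinB lee_fin /phiev /= !(ip0l' Hip) /k; lra.
- have fx0 : (f x0 < +oo)%E by exact: x0d.
  have := hmin x0; rewrite subrr normr0 expr0n /= mulr0 adde0 => hx.
  case Efx: (f x) hx fN => [r| |] hx fN; last by have := fN x; rewrite Efx.
    2: by move: hx fx0; case: (f x0) => //.
  split; first by rewrite Efx ltry.
  move=> y; have := hmin y; rewrite Efx.
  case: (f y) (fN y) => [s| |] // _.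
    rewrite -!EFinD !lee_fin /phiev /phidiff /=.
    rewrite !(ipBl' Hip) !(ipZl' Hip) !(ip0l' Hip) (normB2 Hip y x0) (normB2 Hip x x0).
    move=> h; rewrite -subr_ge0; rewrite -subr_ge0 in h.
    set A := `|x| ^+ 2 in h *; set B := `|y| ^+ 2 in h *; set C := `|x0| ^+ 2 in h *.
    set P := ip x0 x in h *; set Q := ip x0 y in h *.
    move: h; clearbody k A B C P Q.
    suff -> : s - r - (- (a0 - - k) * B + (2 * (k + a0) * Q - 0) -
      (- (a0 - - k) * A + (2 * (k + a0) * P - 0))) =
      s + (k + a0) * (B - 2 * Q + C) - (r + (k + a0) * (A - 2 * P + C)) by [].
    ring.
  by move=> _; rewrite /= leey.
Qed.
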